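(* Let $n\ge5$. On the $n$-gon graph over $\mathbb{F}_2$ with exterior algebra $\Omega_{min}=\Omega(\mathbb{Z}_n)$, the unique quantum metric $g=e^+\otimes e^-+e^-\otimes e^+$ has a unique QLC, namely $\nabla e^\pm=0$. It has $\sigma$ equal to the flip map $e^a\otimes e^b\mapsto e^b\otimes e^a$ ($a,b\in\{+,-\}$) and is flat.
   Context: $A=\mathbb{F}_2(\mathbb{Z}_n)$; $(R_\pm f)(i)=f(i\pm1)$ mod $n$. The $n$-gon graph has arrows $i\to i\pm1$ mod $n$; the calculus has basis over $A$ given by $e^+=\sum_i (i\to i+1)$, $e^-=\sum_i(i\to i-1)$, with $e^\pm f=(R_\pm f)e^\pm$ and ${\rm d} f=(R_+f+f)e^++(R_-f+f)e^-$; $\Omega^1\otimes_A\Omega^1$ is free with basis $e^a\otimes e^b$. $\Omega(\mathbb{Z}_n)$ is the exterior algebra generated by $A$ and $e^\pm$ with relations $(e^\pm)^2=0$, $e^+\wedge e^-+e^-\wedge e^+=0$, ${\rm d} e^\pm=0$. A bimodule connection is a linear $\nabla:\Omega^1\to\Omega^1\otimes_A\Omega^1$ with $\nabla(f\omega)={\rm d} f\otimes\omega+f\nabla\omega$ and $\nabla(\omega f)=(\nabla\omega)f+\sigma(\omega\otimes{\rm d} f)$ for a bimodule map $\sigma$; it is a QLC if $T_\nabla=\wedge\nabla-{\rm d}=0$ and $(\nabla\otimes\mathrm{id}+(\sigma\otimes\mathrm{id})(\mathrm{id}\otimes\nabla))g=0$. Flat means $R_\nabla=({\rm d}\otimes\mathrm{id}-(\wedge\otimes\mathrm{id})(\mathrm{id}\otimes\nabla))\nabla=0$.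 *)

(* Defs.v *)
(* The n-gon calculus over F_2, written in the left A-bases
   e^+, e^-  (Omega^1),  e^a (x) e^b  (Omega^1 (x)_A Omega^1),
   e^a (x) e^b (x) e^c  (triple tensor),  e^+ /\ e^-  (Omega^2 of Omega(Z_n)),
   (e^+ /\ e^-) (x) e^c  (Omega^2 (x)_A Omega^1).
   Index convention: [true] stands for "+", [false] for "-".
   An element is given by its (left) coefficient functions in A = F_2(Z_n). *)
From HB Require Import structures.
From mathcomp Require Import all_boot all_algebra.
Set Implicit Arguments. Unset Strict Implicit. Unset Printing Implicit Defensive.
Import GRing.Theory.
Local Open Scope ring_scope.

Section NGon.
Variable n : nat.

Definition A := 'I_n -> 'F_2.
(* w : Om1 represents  w true * e^+ + w false * e^- *)
Definition Om1 := bool -> A.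
(* t : Om11 represents  sum_{a,b} t a b * e^a (x) e^b *)
Definition Om11 := bool -> bool -> A.
(* u : Om111 represents  sum_{a,b,c} u a b c * e^a (x) e^b (x) e^c *)
Definition Om111 := bool -> bool -> bool -> A.
(* h : Om2 represents  h * e^+ /\ e^-   (Omega^2 is free of rank 1 on e^+/\e^-,
   since (e^a)^2 = 0 and e^- /\ e^+ = - e^+ /\ e^- = e^+ /\ e^- in char 2) *)
Definition Om2 := A.
(* r : Om21 represents  sum_c r c * (e^+ /\ e^-) (x) e^c *)
Definition Om21 := bool -> A.

(* (R_+ f)(i) = f(i+1), (R_- f)(i) = f(i-1) mod n *)
Definition shift (a : bool) (f : A) : A :=
  fun i => f (if a then ordS i else ord_pred i).

Definition zeroA : A := fun _ => 0.
Definition zero11 : Om11 := fun _ _ => zeroA.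
Definition zero111 : Om111 := fun _ _ _ => zeroA.
Definition zero21 : Om21 := fun _ => zeroA.

Definition add1 (w v : Om1) : Om1 := fun a i => w a i + v a i.
Definition add11 (t s : Om11) : Om11 := fun a b i => t a b i + s a b i.
Definition add111 (t s : Om111) : Om111 := fun a b c i => t a b c i + s a b c i.

Definition eb (a : bool) : Om1 := fun b _ => if b == a then 1 else 0.

(* bimodule structure: e^a f = (R_a f) e^a *)
Definition lmul1 (f : A) (w : Om1) : Om1 := fun a i => f i * w a i.
Definition rmul1 (w : Om1) (f : A) : Om1 := fun a i => w a i * shift a f i.
Definition lmul11 (f : A) (t : Om11) : Om11 := fun a b i => f i * t a b i.
Definition rmul11 (t : Om11) (f : A) : Om11 :=
  fun a b i => t a b i * shift a (shift b f) i.

Definition dA (f : A) : Om1 := fun a i => shift a f i + f i.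

Definition tens (w v : Om1) : Om11 := fun a b i => w a i * shift a (v b) i.
Definition tens21 (t : Om11) (v : Om1) : Om111 :=
  fun a b c i => t a b i * shift a (shift b (v c)) i.
Definition tens12 (w : Om1) (t : Om11) : Om111 :=
  fun a b c i => w a i * shift a (t b c) i.

Definition wedge (w v : Om1) : Om2 :=
  fun i => w true i * shift true (v false) i + w false i * shift false (v true) i.
Definition wedge11 (t : Om11) : Om2 := fun i => t true false i + t false true i.

(* exterior derivative on Omega^1:  d(w_a e^a) = d w_a /\ e^a  (d e^a = 0) *)
Definition d1 (w : Om1) : Om2 :=
  fun i => wedge (dA (w true)) (eb true) i + wedge (dA (w false)) (eb false) i.

Definition sigma_id (s : Om11 -> Om11) (u : Om111) : Om111 :=
  fun a b c => s (fun a' b' => u a' b' c) a b.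
Definition wedge_id (u : Om111) : Om21 := fun c => wedge11 (fun a b => u a b c).

Definition flip (t : Om11) : Om11 := fun a b => t b a.

Definition gmetric : Om11 := add11 (tens (eb true) (eb false)) (tens (eb false) (eb true)).

Definition left_connection (nabla : Om1 -> Om11) : Prop :=
  (forall w v, nabla (add1 w v) = add11 (nabla w) (nabla v)) /\
  (forall f w, nabla (lmul1 f w) = add11 (tens (dA f) w) (lmul11 f (nabla w))).

Definition bimodule_map (s : Om11 -> Om11) : Prop :=
  (forall t t', s (add11 t t') = add11 (s t) (s t')) /\
  (forall f t, s (lmul11 f t) = lmul11 f (s t)) /\
  (forall t f, s (rmul11 t f) = rmul11 (s t) f).

Definition bimodule_connection (nabla : Om1 -> Om11) (s : Om11 -> Om11) : Prop :=
  left_connection nabla /\ bimodule_map s /\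
  (forall w f, nabla (rmul1 w f) = add11 (rmul11 (nabla w) f) (s (tens w (dA f)))).

Definition torsion_free (nabla : Om1 -> Om11) : Prop :=
  forall w, wedge11 (nabla w) = d1 w.

(* (nabla (x) id + (sigma (x) id)(id (x) nabla)) g = 0, evaluated on
   g = e^+ (x) e^- + e^- (x) e^+  (char 2: signs irrelevant) *)
Definition metric_compatible (nabla : Om1 -> Om11) (s : Om11 -> Om11) : Prop :=
  add111
    (add111 (tens21 (nabla (eb true)) (eb false))
            (sigma_id s (tens12 (eb true) (nabla (eb false)))))
    (add111 (tens21 (nabla (eb false)) (eb true))
            (sigma_id s (tens12 (eb false) (nabla (eb true)))))
  = zero111.

Definition QLC (nabla : Om1 -> Om11) (s : Om11 -> Om11) : Prop :=
  bimodule_connection nabla s /\ torsion_free nabla /\ metric_compatible nabla s.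

(* R_nabla = (d (x) id - (/\ (x) id)(id (x) nabla)) nabla, computed by writing
   nabla w = sum_c (row c) (x) e^c  with (row c) a = (nabla w) a c;
   minus = plus in characteristic 2 *)
Definition curvature (nabla : Om1 -> Om11) (w : Om1) : Om21 :=
  let row := fun c : bool => (fun a : bool => nabla w a c) in
  fun c i =>
    d1 (row c) i
    + wedge_id (tens12 (row true) (nabla (eb true))) c i
    + wedge_id (tens12 (row false) (nabla (eb false))) c i.

Definition flat (nabla : Om1 -> Om11) : Prop :=
  forall w, curvature nabla w = zero21.

End NGon.

(* Main.v *)
Require Import Defs.
From mathcomp Require Import all_boot all_algebra.
From mathcomp Require Import zify.
From Stdlib Require Import FunctionalExtensionality.
Import GRing.Theory.

Lemma iterS_val n (j : 'I_n) k : nat_of_ord (iter k (@ordS n) j) = (j + k) %% n.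
Proof.
elim: k => [|k IH] /=; first by rewrite addn0 modn_small.
by rewrite IH -addn1 modnDml addn1 addnS.
Qed.

Lemma iterS_neq n (j : 'I_n) k : (0 < k < n)%N -> iter k (@ordS n) j != j.
Proof.
move=> /andP[k0 kn]; apply/eqP => /(congr1 (@nat_of_ord n)); rewrite iterS_val.
have jn := ltn_ord j.
case: (ltnP (j + k) n) => h.
  rewrite modn_small //; lia.
have -> : (j + k = (j + k - n) + n)%N by lia.
rewrite modnDr modn_small; lia.
Qed.

Lemma neq_iter n (hn : (4 < n)%N) (j : 'I_n) k l : (k < l <= 4)%N ->
  (iter l (@ordS n) j == iter k (@ordS n) j) = false.
Proof.
move=> /andP[kl l4]. have -> : l = ((l - k) + k)%N by lia.
rewrite iterD; apply/negbTE/iterS_neq; lia.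
Qed.

Lemma pn10 n (hn : (4 < n)%N) (i : 'I_n) : (ord_pred i == ord_pred (ord_pred i)) = false.
Proof. by move: (@neq_iter n hn (ord_pred (ord_pred i)) 0%N 1%N isT); rewrite /= ?ord_predK. Qed.
Lemma pn01 n (hn : (4 < n)%N) (i : 'I_n) : (ord_pred (ord_pred i) == ord_pred i) = false.
Proof. by rewrite eq_sym pn10. Qed.
Lemma pn20 n (hn : (4 < n)%N) (i : 'I_n) : (i == ord_pred (ord_pred i)) = false.
Proof. by move: (@neq_iter n hn (ord_pred (ord_pred i)) 0%N 2%N isT); rewrite /= ?ord_predK. Qed.
Lemma pn02 n (hn : (4 < n)%N) (i : 'I_n) : (ord_pred (ord_pred i) == i) = false.
Proof. by rewrite eq_sym pn20. Qed.
Lemma pn30 n (hn : (4 < n)%N) (i : 'I_n) : (ordS i == ord_pred (ord_pred i)) = false.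
Proof. by move: (@neq_iter n hn (ord_pred (ord_pred i)) 0%N 3%N isT); rewrite /= ?ord_predK. Qed.
Lemma pn03 n (hn : (4 < n)%N) (i : 'I_n) : (ord_pred (ord_pred i) == ordS i) = false.
Proof. by rewrite eq_sym pn30. Qed.
Lemma pn40 n (hn : (4 < n)%N) (i : 'I_n) : (ordS (ordS i) == ord_pred (ord_pred i)) = false.
Proof. by move: (@neq_iter n hn (ord_pred (ord_pred i)) 0%N 4%N isT); rewrite /= ?ord_predK. Qed.
Lemma pn04 n (hn : (4 < n)%N) (i : 'I_n) : (ord_pred (ord_pred i) == ordS (ordS i)) = false.
Proof. by rewrite eq_sym pn40. Qed.
Lemma pn21 n (hn : (4 < n)%N) (i : 'I_n) : (i == ord_pred i) = false.
Proof. by move: (@neq_iter n hn (ord_pred (ord_pred i)) 1%N 2%N isT); rewrite /= ?ord_predK. Qed.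
Lemma pn12 n (hn : (4 < n)%N) (i : 'I_n) : (ord_pred i == i) = false.
Proof. by rewrite eq_sym pn21. Qed.
Lemma pn31 n (hn : (4 < n)%N) (i : 'I_n) : (ordS i == ord_pred i) = false.
Proof. by move: (@neq_iter n hn (ord_pred (ord_pred i)) 1%N 3%N isT); rewrite /= ?ord_predK. Qed.
Lemma pn13 n (hn : (4 < n)%N) (i : 'I_n) : (ord_pred i == ordS i) = false.
Proof. by rewrite eq_sym pn31. Qed.
Lemma pn41 n (hn : (4 < n)%N) (i : 'I_n) : (ordS (ordS i) == ord_pred i) = false.
Proof. by move: (@neq_iter n hn (ord_pred (ord_pred i)) 1%N 4%N isT); rewrite /= ?ord_predK. Qed.
Lemma pn14 n (hn : (4 < n)%N) (i : 'I_n) : (ord_pred i == ordS (ordS i)) = false.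
Proof. by rewrite eq_sym pn41. Qed.
Lemma pn32 n (hn : (4 < n)%N) (i : 'I_n) : (ordS i == i) = false.
Proof. by move: (@neq_iter n hn (ord_pred (ord_pred i)) 2%N 3%N isT); rewrite /= ?ord_predK. Qed.
Lemma pn23 n (hn : (4 < n)%N) (i : 'I_n) : (i == ordS i) = false.
Proof. by rewrite eq_sym pn32. Qed.
Lemma pn42 n (hn : (4 < n)%N) (i : 'I_n) : (ordS (ordS i) == i) = false.
Proof. by move: (@neq_iter n hn (ord_pred (ord_pred i)) 2%N 4%N isT); rewrite /= ?ord_predK. Qed.
Lemma pn24 n (hn : (4 < n)%N) (i : 'I_n) : (i == ordS (ordS i)) = false.
Proof. by rewrite eq_sym pn42. Qed.
Lemma pn43 n (hn : (4 < n)%N) (i : 'I_n) : (ordS (ordS i) == ordS i) = false.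
Proof. by move: (@neq_iter n hn (ord_pred (ord_pred i)) 3%N 4%N isT); rewrite /= ?ord_predK. Qed.
Lemma pn34 n (hn : (4 < n)%N) (i : 'I_n) : (ordS i == ordS (ordS i)) = false.
Proof. by rewrite eq_sym pn43. Qed.


Local Open Scope ring_scope.

Lemma F2_cases (x : 'F_2) : x = 0 \/ x = 1.
Proof. case: x => [[|[|m]] Hm]; [left|right|]; try exact: val_inj. by []. Qed.
Lemma F2_11 : (1 + 1 : 'F_2) = 0. Proof. by apply: val_inj. Qed.
Lemma F2_10 : (1 : 'F_2) <> 0. Proof. by move/(congr1 val). Qed.

Ltac f2_atom t :=
  lazymatch t with
  | GRing.add _ _ => fail | GRing.mul _ _ => fail | @GRing.zero _ => fail | @GRing.one _ => fail
  | GRing.opp _ => fail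
  | _ => tryif is_var t then fail else (let T := type of t in unify T ('F_2))
  end.

Lemma F2_ind (P : 'F_2 -> Prop) : P 0 -> P 1 -> forall x, P x.
Proof. by move=> h0 h1 x; case: (F2_cases x) => ->. Qed.

Lemma f2_imp_f (a b : 'F_2) (P : Prop) : (a == b) = false -> a = b -> P.
Proof. by move=> h e; rewrite e eqxx in h. Qed.
Lemma f2_imp_t (a b : 'F_2) (P : Prop) : (a == b) = true -> P -> a = b -> P.
Proof. by []. Qed.
Lemma f2_concl (a b : 'F_2) : (a == b) = true -> a = b.
Proof. by move/eqP. Qed.

Ltac f2_close :=
  repeat match goal with
  | |- (@eq ?T _ _) -> _ =>
      tryif unify T bool then fail else
      first [ apply: f2_imp_f; by vm_compute | apply: f2_imp_t; [by vm_compute|] ]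
  | |- _ /\ _ => split
  end;
  apply: f2_concl; by vm_compute.

Ltac f2_simp := rewrite ?(mul0r, mulr0, mul1r, mulr1, add0r, addr0, F2_11).

Ltac f2_brute :=
  repeat match goal with
  | |- context [?t] => f2_atom t; let x := fresh "x" in generalize t; intro x
  end;
  repeat match goal with x : 'F_2 |- _ => revert x end;
  repeat match goal with |- forall x : 'F_2, _ => apply: F2_ind end;
  f2_close.

Definition nab0 n : Om1 n -> Om11 n := fun w a b i => dA (w b) a i.

Definition pt {n} (a : bool) (i : 'I_n) : 'I_n := if a then ordS i else ord_pred i.

Ltac pw := repeat (apply: functional_extensionality_dep => ?).
Ltac unf := cbv beta iota delta [nab0 add1 add11 add111 lmul1 lmul11 rmul1 rmul11 tens tens21 tens12
  dA eb shift wedge wedge11 d1 sigma_id wedge_id flip zero11 zero111 zero21 zeroA gmetric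
  metric_compatible curvature pt]; simpl.

Ltac bcases := repeat match goal with b : bool |- _ => destruct b end.
Ltac fin := bcases; simpl; rewrite ?ordSK ?ord_predK; f2_brute.

Lemma ex_QLC n : QLC (@nab0 n) (@flip n).
Proof.
split; [split; [split|split; [split; [|split]|]]|split].
- move=> w v; pw; unf; f2_brute.
- move=> f w; pw; unf; f2_brute.
- move=> t t'; by pw.
- move=> f t; by pw.
- move=> t f; pw; unf; fin.
- move=> w f; pw; unf; fin.
- move=> w; pw; unf; fin.
- unf; pw; fin.
Qed.


Definition delta {n} (p : 'I_n) : A n := fun j => if j == p then 1 else 0.


Ltac ptsimp hn := rewrite ?ordSK ?ord_predK ?(@pn10 _ hn, @pn01 _ hn, @pn20 _ hn, @pn02 _ hn, @pn30 _ hn, @pn03 _ hn, @pn40 _ hn, @pn04 _ hn, @pn21 _ hn, @pn12 _ hn, @pn31 _ hn, @pn13 _ hn, @pn41 _ hn, @pn14 _ hn, @pn32 _ hn, @pn23 _ hn, @pn42 _ hn, @pn24 _ hn, @pn43 _ hn, @pn34 _ hn) ?eqxx /=.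

Ltac inst HL Hrep hn a p d e i := move: (HL a (delta p) d e i); rewrite Hrep /delta; unf; ptsimp hn.

Lemma uniq_part n (hn : (4 < n)%N) (nabla : Om1 n -> Om11 n) s : QLC nabla s ->
      nabla (@eb n true) = @zero11 n /\ nabla (@eb n false) = @zero11 n /\
      s = @flip n /\ flat nabla.
Proof.
move=> [[[Hadd Hlm] [[Sadd [Slm Srm]] Hr]] [Htor Hmet]].
pose E := fun c d : bool => (fun a b (_ : 'I_n) => if (a == c) && (b == d) then 1 else 0 : 'F_2) : Om11 n.
have [S HS] : exists S : bool -> bool -> Om11 n, forall c d, s (E c d) = S c d by exists (fun c d => s (E c d)).
have [G HG] : exists G : bool -> Om11 n, forall a, nabla (eb a) = G a by exists (fun a => nabla (eb a)).
have Hrep : forall t a b i, s t a b i = t true true i * S true true a b i + t true false i * S true false a b i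
   + t false true i * S false true a b i + t false false i * S false false a b i.
  move=> t a b i.
  have Ht : t = add11 (add11 (lmul11 (t true true) (E true true)) (lmul11 (t true false) (E true false)))
     (add11 (lmul11 (t false true) (E false true)) (lmul11 (t false false) (E false false))).
    pw; rewrite /E; unf; fin.
  rewrite {1}Ht !Sadd !Slm !HS /add11 /lmul11 /=; by rewrite !addrA.
have HL : forall a f d e i, tens (dA (shift a f)) (eb a) d e i + shift a f i * G a d e i
     = G a d e i * shift d (shift e f) i + s (tens (eb a) (dA f)) d e i.
  move=> a f d e i. have h := Hr (eb a) f.
  have E1 : rmul1 (eb a) f = lmul1 (shift a f) (eb a) by pw; unf; fin.
  rewrite E1 Hlm HG in h. move/(congr1 (fun t => t d e i)): h.
  by rewrite /add11 /lmul11 /rmul11 /=.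
move=> {Hr Slm Srm Sadd}.
have Z1 : forall i, S true false true true i = 0.
  by move=> i; inst HL Hrep hn true i true true i; f2_brute.
have Z2 : forall i, S false true true true i = 0.
  by move=> i; inst HL Hrep hn false i true true i; f2_brute.
have Z3 : forall i, S false false true true i = 0.
  by move=> i; inst HL Hrep hn false (ord_pred (ord_pred i)) true true i; f2_brute.
have Z1' : forall i, S false true false false i = 0.
  by move=> i; inst HL Hrep hn false i false false i; f2_brute.
have Z2' : forall i, S true false false false i = 0.
  by move=> i; inst HL Hrep hn true i false false i; f2_brute.
have Z3' : forall i, S true true false false i = 0.
  by move=> i; inst HL Hrep hn true (ordS (ordS i)) false false i; f2_brute.
have G1 : forall i, G true true true i = 1 + S true true true true i.
  by move=> i; inst HL Hrep hn true (ordS i) true true i; rewrite Z1; f2_brute.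
have G1' : forall i, G false false false i = 1 + S false false false false i.
  by move=> i; inst HL Hrep hn false (ord_pred i) false false i; rewrite Z1'; f2_brute.
have Hm : forall a b c i, add111
    (add111 (tens21 (nabla (eb true)) (eb false))
            (sigma_id s (tens12 (eb true) (nabla (eb false)))))
    (add111 (tens21 (nabla (eb false)) (eb true))
            (sigma_id s (tens12 (eb false) (nabla (eb true))))) a b c i = 0.
  by move=> a b c i; rewrite Hmet.
have M : forall i, S true true true true i = 1 /\ G false true false (ordS i) = 0.
  move=> i; move: (Hm true true false i); cbv beta delta [add111 sigma_id].
  rewrite !Hrep !HG; unf; rewrite G1 Z1 Z2 Z3; f2_brute.
have M' : forall i, S false false false false i = 1 /\ G true false true (ord_pred i) = 0.
  move=> i; move: (Hm false false true i); cbv beta delta [add111 sigma_id].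
  rewrite !Hrep !HG; unf; rewrite G1' Z1' Z2' Z3'; f2_brute.
have Ga : forall j, G false true false j = 0.
  by move=> j; rewrite -(ord_predK j); exact: (M (ord_pred j)).2.
have Gb : forall j, G true false true j = 0.
  by move=> j; rewrite -(ordSK j); exact: (M' (ordS j)).2.
have Ht : forall a i, G a true false i + G a false true i = 0.
  move=> a i; have := Htor (eb a); rewrite HG => /(congr1 (fun u => u i)).
  by case: a; unf; f2_brute.
have Gc : forall i, G false false true i = 0.
  by move=> i; move: (Ht false i); rewrite Ga; f2_brute.
have Gd : forall i, G true true false i = 0.
  by move=> i; move: (Ht true i); rewrite Gb; f2_brute.
have Ge : forall i, G true false false i = 0.
  by move=> i; inst HL Hrep hn true (ord_pred (ord_pred i)) false false i; f2_brute.
have Gf : forall i, G false true true i = 0.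
  by move=> i; inst HL Hrep hn false (ordS (ordS i)) true true i; f2_brute.
have G0 : forall a d e i, G a d e i = 0.
  move=> a d e i; case: a; case: d; case: e => //.
  - by rewrite G1 (M i).1 F2_11.
  - by rewrite G1' (M' i).1 F2_11.
have SV : forall c c' d e i, S c c' d e i = if (d == c') && (e == c) then 1 else 0.
  move=> c c' d e i; move: (HL c (delta (pt c' (pt c i))) d e i); rewrite Hrep /delta !G0.
  by destruct c, c', d, e; unf; ptsimp hn; f2_brute.
have Hnw : forall w, nabla w = nab0 n w.
  move=> w.
  have Hw : w = add1 (lmul1 (w true) (eb true)) (lmul1 (w false) (eb false)) by pw; unf; fin.
  rewrite {1}Hw Hadd !Hlm !HG; pw; unf; rewrite ?G0; fin.
split; first by rewrite HG; pw; rewrite /zero11 /zeroA G0.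
split; first by rewrite HG; pw; rewrite /zero11 /zeroA G0.
split.
  pw; rewrite Hrep !SV /flip; bcases; simpl; f2_brute.
move=> w; rewrite /curvature !Hnw; pw; unf; fin.
Qed.

Theorem proposition4p8 (n : nat) (hn : (5 <= n)%N) :
  (exists (nabla : Om1 n -> Om11 n) (s : Om11 n -> Om11 n),
      QLC nabla s /\ nabla (@eb n true) = @zero11 n /\ nabla (@eb n false) = @zero11 n)
  /\
  (forall (nabla : Om1 n -> Om11 n) (s : Om11 n -> Om11 n),
      QLC nabla s ->
      nabla (@eb n true) = @zero11 n /\ nabla (@eb n false) = @zero11 n /\
      s = @flip n /\ flat nabla).
Proof.
split.
  exists (@nab0 n), (@flip n); split; first exact: ex_QLC.
  by split; pw; unf; fin.
move=> nabla s H; exact: (@uniq_part n hn nabla s H).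
Qed.
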